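(* Let $(X_0^T,Y_0^T)$ be a pair of jointly distributed continuous-time stochastic processes on $[0,T)$, and let $\mathbf{t},\mathbf{t}'\in\mathcal{T}(0,T)$ be partitions such that $\mathbf{t}'$ is a refinement of $\mathbf{t}$, i.e., $\{t_i\}\subset\{t'_i\}$. Then $$I_{\mathbf{t}'}(X_0^T\to Y_0^T)\le I_{\mathbf{t}}(X_0^T\to Y_0^T).$$
   Context: All random objects live on a common probability space. For random objects $U,V,W$ with values in arbitrary measurable spaces, the conditional mutual information is $I(U;V\mid W):=\sup I([U];[V]\mid W)$, where the supremum is over all finite quantizations $[U],[V]$ of $U$ and $V$. It takes values in $[0,\infty]$, and the unconditional mutual information is the case of trivial $W$. For a continuous-time process $\{X_t\}$ and $a<b$, write $X_a^b=\{X_s: a\le s<b\}$; the object $Y_0^0$ is trivial (constant). A (finite) partition of $[0,T)$ is a vector $\mathbf{t}=(t_0,t_1,\ldots,t_n)$ with $0=t_0<t_1<\cdots<t_n=T$, and $\mathcal{T}(0,T)$ denotes the set of all such partitions. For a partition $\mathbf{t}$, $$I_{\mathbf{t}}(X_0^T\to Y_0^T):=\sum_{i=1}^n I\big(Y_{t_{i-1}}^{t_i};X_0^{t_i}\,\big|\,Y_0^{t_{i-1}}\big).$$ This is the discrete-time directed information $I(A^n\to B^n)=\sum_{i=1}^n I(A^i;B_i\mid B^{i-1})$ between the length-$n$ sequences of path segments $A_i=X_{t_{i-1}}^{t_i}$ and $B_i=Y_{t_{i-1}}^{t_i}$. *)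

(* Defs.v *)
From HB Require Import structures.
From mathcomp Require Import all_boot all_order all_algebra.
From mathcomp Require Import all_classical all_reals all_analysis.
Set Implicit Arguments. Unset Strict Implicit. Unset Printing Implicit Defensive.
Import Order.TTheory GRing.Theory Num.Theory.
Local Open Scope classical_set_scope.
Local Open Scope ring_scope.

Section InfoDefs.
Variables (d : measure_display) (Omega : measurableType d) (R : realType).
Variable P : probability Omega R.

Definition dmi (K1 K2 : finType) (A : Omega -> K1) (B : Omega -> K2) : R :=
  \sum_(a : K1) \sum_(b : K2)
    let p := fine (P (A @^-1` [set a] `&` B @^-1` [set b])) in
    let pa := fine (P (A @^-1` [set a])) in
    let pb := fine (P (B @^-1` [set b])) in
    if 0 < p then p * ln (p / (pa * pb)) else 0.

(* A finite quantization of a random object whose information is the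
   sigma-algebra G: a finite-valued function whose level sets lie in G. *)
Definition quantization (G : set (set Omega)) (n : nat) (q : Omega -> 'I_n) : Prop :=
  forall k : 'I_n, G (q @^-1` [set k]).

(* I(A;B | W) for finite-valued A, B and arbitrary W (with sigma-algebra GW),
   via the chain rule I(A;B|W) = I(A;(B,W)) - I(A;W), where mutual information
   with the arbitrary object W is the supremum over finite quantizations of W.
   Both suprema are finite (bounded by H(A)). *)
Definition cmi_fin (GW : set (set Omega)) (K1 K2 : finType)
    (A : Omega -> K1) (B : Omega -> K2) : \bar R :=
  (ereal_sup [set x | exists n (q : Omega -> 'I_n),
       quantization GW q /\ x = (dmi A (fun w => (B w, q w)))%:E]
   - ereal_sup [set x | exists n (q : Omega -> 'I_n),
       quantization GW q /\ x = (dmi A q)%:E])%E.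

(* I(U;V | W) := sup over finite quantizations [U],[V] of I([U];[V] | W);
   U, V, W are given through the sigma-algebras they generate. *)
Definition cmi (GU GV GW : set (set Omega)) : \bar R :=
  ereal_sup [set x | exists n m (qu : Omega -> 'I_n) (qv : Omega -> 'I_m),
       quantization GU qu /\ quantization GV qv /\ x = cmi_fin GW qu qv].

(* The sigma-algebra generated by the path segment X_a^b = {X_s : a <= s < b}
   (i.e. the preimage of the product sigma-algebra under the segment map). *)
Definition seg_sigma (dT : measure_display) (T : measurableType dT)
    (X : R -> Omega -> T) (a b : R) : set (set Omega) :=
  <<s [set E | exists s A, a <= s < b /\ measurable A /\ E = X s @^-1` A] >>.

Definition is_partition (T : R) (t : seq R) : Prop :=
  [/\ (1 < size t)%N, sorted (fun x y => x < y) t,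
      nth 0 t 0 = 0 & nth 0 t (size t).-1 = T].

Definition dir_info_part (dX dY : measure_display)
    (TX : measurableType dX) (TY : measurableType dY)
    (X : R -> Omega -> TX) (Y : R -> Omega -> TY) (t : seq R) : \bar R :=
  (\sum_(1 <= i < size t)
     cmi (seg_sigma Y (nth 0%R t i.-1) (nth 0%R t i))
           (seg_sigma X 0%R (nth 0%R t i))
           (seg_sigma Y 0%R (nth 0%R t i.-1)))%E.

End InfoDefs.

(* Main.v *)
Require Import Defs.
From HB Require Import structures.
From mathcomp Require Import all_boot all_order all_algebra.
From mathcomp Require Import all_classical all_reals all_analysis.
From mathcomp Require Import ring lra.
Import Order.TTheory GRing.Theory Num.Theory.
Local Open Scope classical_set_scope.
Local Open Scope ring_scope.

Module P1.
Import Order.TTheory GRing.Theory Num.Theory.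
Set Implicit Arguments. Unset Strict Implicit. Unset Printing Implicit Defensive.
Local Open Scope classical_set_scope.
Local Open Scope ring_scope.

Section Info.
Variables (d : measure_display) (Omega : measurableType d) (R : realType).
Variable P : probability Omega R.

Definition pr (A : set Omega) : R := fine (P A).

Lemma prE A : measurable A -> P A = (pr A)%:E.
Proof.
move=> mA; rewrite /pr fineK // ge0_fin_numE ?measure_ge0 //.
by rewrite (le_lt_trans (probability_le1 P mA)) // ltry.
Qed.

Lemma pr_ge0 A : 0 <= pr A.
Proof. by apply: fine_ge0; apply: measure_ge0. Qed.

Lemma pr_le1 A : measurable A -> pr A <= 1.
Proof. by move=> mA; rewrite -lee_fin -prE //; exact: probability_le1. Qed.

Lemma pr_setT : pr setT = 1.
Proof. by rewrite /pr probability_setT. Qed.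

Lemma pr_set0 : pr set0 = 0.
Proof. by rewrite /pr measure0. Qed.

Lemma pr_mono A B : measurable A -> measurable B -> A `<=` B -> pr A <= pr B.
Proof.
move=> mA mB AB; have : (P A <= P B)%E by rewrite le_measure ?inE.
by rewrite !prE // lee_fin.
Qed.

Lemma pr_U A B : measurable A -> measurable B -> A `&` B = set0 ->
  pr (A `|` B) = pr A + pr B.
Proof.
move=> mA mB AB; rewrite /pr (measureU P mA mB AB) fineD //.
  by rewrite ge0_fin_numE ?measure_ge0 // (le_lt_trans (probability_le1 P mA)) // ltry.
by rewrite ge0_fin_numE ?measure_ge0 // (le_lt_trans (probability_le1 P mB)) // ltry.
Qed.

Lemma pr_Ule A B : measurable A -> measurable B -> pr (A `|` B) <= pr A + pr B.
Proof.
move=> mA mB; rewrite -lee_fin EFinD -!prE //; last exact: measurableU.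
exact: measureU2.
Qed.

Lemma exists_omega : exists w : Omega, True.
Proof.
apply/not_existsP => H.
have : setT = set0 :> set Omega by apply/seteqP; split => // w; have := H w.
move=> T0; have := pr_setT; rewrite T0 pr_set0 => /eqP; by rewrite eq_sym oner_eq0.
Qed.

Definition rv (K : Type) (X : Omega -> K) := forall k, measurable (X @^-1` [set k]).

Lemma rv_seq (K : eqType) (X : Omega -> K) (s : seq K) : rv X ->
  measurable (X @^-1` [set k | k \in s]).
Proof.
move=> hX; elim: s => [|a s IH].
  rewrite (_ : _ @^-1` _ = set0) //; by apply/seteqP; split => w //=.
rewrite (_ : _ @^-1` _ = X @^-1` [set a] `|` X @^-1` [set k | k \in s]).
  exact: measurableU.
apply/seteqP; split => w /=; rewrite inE.
  by case/orP => [/eqP ->|ws]; [left|right].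
by case => [->|ws]; rewrite ?eqxx ?ws ?orbT.
Qed.

Lemma rv_pre (K : finType) (X : Omega -> K) (A : set K) : rv X ->
  measurable (X @^-1` A).
Proof.
move=> hX; rewrite (_ : A = [set k | k \in [seq k <- enum K | `[< A k >]]]).
  exact: rv_seq.
apply/seteqP; split => k /=; rewrite mem_filter mem_enum andbT.
  by move=> Ak; apply/asboolP.
by move/asboolP.
Qed.

Lemma rv_comp (K K' : finType) (X : Omega -> K) (f : K -> K') : rv X -> rv (f \o X).
Proof. by move=> hX k; rewrite comp_preimage; exact: rv_pre. Qed.

Lemma rv_pair (K1 K2 : Type) (X : Omega -> K1) (Y : Omega -> K2) :
  rv X -> rv Y -> rv (fun w => (X w, Y w)).
Proof.
move=> hX hY [a b]; rewrite (_ : _ @^-1` _ = X @^-1` [set a] `&` Y @^-1` [set b]).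
  exact: measurableI.
by apply/seteqP; split => w /= => [[-> ->]|[-> ->]].
Qed.

Lemma sum_part_seq (K : eqType) (X : Omega -> K) (s : seq K) S : rv X -> measurable S ->
  uniq s -> \sum_(k <- s) pr (S `&` X @^-1` [set k]) = pr (S `&` X @^-1` [set k | k \in s]).
Proof.
move=> hX mS; elim: s => [|a s IH].
  rewrite big_nil (_ : _ `&` _ = set0) ?pr_set0 //; by apply/seteqP; split => w //= [].
rewrite /= => /andP[nas us]; rewrite big_cons IH //.
rewrite (_ : S `&` X @^-1` [set k | k \in a :: s] = (S `&` X @^-1` [set a]) `|` (S `&` X @^-1` [set k | k \in s])).
  have m1 : measurable (S `&` X @^-1` [set a]) by exact: measurableI.
  have m2 : measurable (S `&` X @^-1` [set k | k \in s]).
    by apply: measurableI => //; exact: rv_seq.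
  rewrite pr_U //.
  apply/seteqP; split => w //= [[_ ->] [_ aS]]; by rewrite aS in nas.
apply/seteqP; split => w /=; rewrite inE.
  by move=> [Sw /orP[/eqP->|ws]]; [left|right].
by move=> [[Sw ->]|[Sw ws]]; split => //; rewrite ?eqxx ?ws ?orbT.
Qed.

Lemma sum_part (K : finType) (X : Omega -> K) S : rv X -> measurable S ->
  \sum_k pr (S `&` X @^-1` [set k]) = pr S.
Proof.
move=> hX mS; rewrite -big_enum /= sum_part_seq ?enum_uniq //.
congr pr; apply/seteqP; split => w /=; first by case.
by move=> Sw; split => //; rewrite mem_enum.
Qed.

End Info.

End P1.
Import P1.

Module P2.
Import Order.TTheory GRing.Theory Num.Theory.
Set Implicit Arguments. Unset Strict Implicit. Unset Printing Implicit Defensive.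
Local Open Scope classical_set_scope.
Local Open Scope ring_scope.

Section Ent.
Variables (d : measure_display) (Omega : measurableType d) (R : realType).
Variable P : probability Omega R.
Local Notation pr := (pr P).
Local Notation rv := (@rv d Omega _).

Lemma ln_le_sub1 (x : R) : 0 < x -> ln x <= x - 1.
Proof.
move=> x0; have := expR_ge1Dx (ln x); rewrite lnK ?posrE //; lra.
Qed.

Definition pm (K : Type) (X : Omega -> K) k := pr (X @^-1` [set k]).
Definition ent (K : finType) (X : Omega -> K) := - \sum_k pm X k * ln (pm X k).

Lemma pm_ge0 K (X : Omega -> K) k : 0 <= pm X k.
Proof. exact: pr_ge0. Qed.

Lemma pm_comp (K K' : finType) (X : Omega -> K) (f : K -> K') y : rv X ->
  pm (f \o X) y = \sum_(x | f x == y) pm X x.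
Proof.
move=> hX; rewrite /pm -(sum_part P hX (rv_comp f hX y)).
rewrite [RHS]big_mkcond; apply: eq_bigr => x _; case: eqP => [fxy|nf].
  congr pr; apply/seteqP; split => w /=; first by case.
  by move=> Xw; split => //; rewrite Xw.
rewrite (_ : _ `&` _ = set0) ?pr_set0 //; apply/seteqP; split => w //= [fw Xw].
by apply: nf; rewrite -Xw.
Qed.

Lemma ent_dp (K K' : finType) (X : Omega -> K) (f : K -> K') : rv X ->
  ent (f \o X) <= ent X.
Proof.
move=> hX; rewrite /ent lerN2.
have -> : \sum_y pm (f \o X) y * ln (pm (f \o X) y) =
          \sum_x pm X x * ln (pm (f \o X) (f x)).
  rewrite (partition_big f predT) //=; apply: eq_bigr => y _.
  rewrite pm_comp // mulr_suml; apply: eq_bigr => x /eqP fx; by rewrite pm_comp // fx.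
apply: ler_sum => x _.
have [->|p0] := eqVneq (pm X x) 0; first by rewrite !mul0r.
have pp : 0 < pm X x by rewrite lt_def p0 pm_ge0.
have le : pm X x <= pm (f \o X) (f x).
  apply: pr_mono; [exact: hX|exact: rv_comp|by move=> w /= ->].
rewrite ler_wpM2l ?pm_ge0 // ler_ln ?posrE //; exact: lt_le_trans le.
Qed.

Lemma ent_ker (K1 K2 : finType) (X : Omega -> K1) (Y : Omega -> K2) : rv X ->
  (forall w w', X w = X w' -> Y w = Y w') -> ent Y <= ent X.
Proof.
move=> hX H; have [w0 _] := exists_omega P.
pose f k := if pselect (exists w, X w = k) is left h then Y (proj1_sig (cid h)) else Y w0.
have -> : Y = f \o X.
  apply: funext => w; rewrite /f /=; case: pselect => [h|nh].
    by apply: H; rewrite (proj2_sig (cid h)).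
  by exfalso; apply: nh; exists w.
exact: ent_dp.
Qed.

Lemma ent_eq (K1 K2 : finType) (X : Omega -> K1) (Y : Omega -> K2) : rv X -> rv Y ->
  (forall w w', X w = X w' <-> Y w = Y w') -> ent X = ent Y.
Proof.
move=> hX hY H; apply/le_anti/andP; split; apply: ent_ker => // w w'; by move/H.
Qed.

Lemma pm_pair (K1 K2 : Type) (A : Omega -> K1) (B : Omega -> K2) a b :
  pm (fun w => (A w, B w)) (a, b) = pr (A @^-1` [set a] `&` B @^-1` [set b]).
Proof. congr pr; apply/seteqP; split => w /= => [[-> ->]|[-> ->]] //. Qed.

Lemma marg (K1 K2 : finType) (A : Omega -> K1) (B : Omega -> K2) a : rv A -> rv B ->
  \sum_b pr (A @^-1` [set a] `&` B @^-1` [set b]) = pm A a.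
Proof. by move=> hA hB; rewrite sum_part. Qed.

Lemma dmi_term (p pa pb : R) : 0 <= p -> p <= pa -> p <= pb ->
  (if 0 < p then p * ln (p / (pa * pb)) else 0) = p * ln p - p * ln pa - p * ln pb.
Proof.
move=> p0 pa0 pb0; case: ifP => [pp|/negbT]; last first.
  rewrite -leNgt => p0'; have -> : p = 0 by apply: le_anti; rewrite p0 p0'.
  by rewrite !mul0r subrr subr0.
have pa' : 0 < pa by apply: lt_le_trans pa0.
have pb' : 0 < pb by apply: lt_le_trans pb0.
rewrite ln_div ?posrE ?mulr_gt0 // lnM ?posrE //; ring.
Qed.

Lemma dmiE (K1 K2 : finType) (A : Omega -> K1) (B : Omega -> K2) : rv A -> rv B ->
  dmi P A B = ent A + ent B - ent (fun w => (A w, B w)).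
Proof.
move=> hA hB; rewrite /dmi.
have -> : \sum_a \sum_b
    (let p := fine (P (A @^-1` [set a] `&` B @^-1` [set b])) in
     let pa := fine (P (A @^-1` [set a])) in
     let pb := fine (P (B @^-1` [set b])) in
     if 0 < p then p * ln (p / (pa * pb)) else 0) =
   \sum_a \sum_b (pr (A @^-1` [set a] `&` B @^-1` [set b]) *
        ln (pr (A @^-1` [set a] `&` B @^-1` [set b])) -
      pr (A @^-1` [set a] `&` B @^-1` [set b]) * ln (pm A a) -
      pr (A @^-1` [set a] `&` B @^-1` [set b]) * ln (pm B b)).
  apply: eq_bigr => a _; apply: eq_bigr => b _ /=.
  apply: dmi_term; first exact: pr_ge0.
  - apply: pr_mono; [apply: measurableI|exact: hA|by move=> w []] => //.
  - apply: pr_mono; [apply: measurableI|exact: hB|by move=> w []] => //.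
rewrite /ent.
have -> : \sum_k pm (fun w => (A w, B w)) k * ln (pm (fun w => (A w, B w)) k) =
   \sum_a \sum_b pr (A @^-1` [set a] `&` B @^-1` [set b]) *
        ln (pr (A @^-1` [set a] `&` B @^-1` [set b])).
  rewrite pair_bigA; apply: eq_bigr => -[a b] _ /=; by rewrite pm_pair.
have -> : \sum_a pm A a * ln (pm A a) =
   \sum_a \sum_b pr (A @^-1` [set a] `&` B @^-1` [set b]) * ln (pm A a).
  apply: eq_bigr => a _; by rewrite -mulr_suml marg.
have -> : \sum_b pm B b * ln (pm B b) =
   \sum_a \sum_b pr (A @^-1` [set a] `&` B @^-1` [set b]) * ln (pm B b).
  rewrite exchange_big /=; apply: eq_bigr => b _; rewrite -mulr_suml.
  rewrite -(marg b hB hA); congr (_ * _); apply: eq_bigr => a _; by rewrite setIC.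
under eq_bigr do rewrite !sumrB.
rewrite !sumrB; lra.
Qed.


Lemma sum3 (K1 K2 K3 : finType) (G : K1 * K2 * K3 -> R) :
  \sum_u G u = \sum_x \sum_y \sum_z G (x, y, z).
Proof.
symmetry; rewrite pair_bigA /= pair_bigA /=; by apply: eq_bigr => -[[x y] z].
Qed.

Lemma sum2 (K1 K2 : finType) (G : K1 * K2 -> R) :
  \sum_u G u = \sum_x \sum_y G (x, y).
Proof. symmetry; rewrite pair_bigA /=; by apply: eq_bigr => -[x y]. Qed.

Lemma sum_xyz_zxy (K1 K2 K3 : finType) (G : K1 -> K2 -> K3 -> R) :
  \sum_x \sum_y \sum_z G x y z = \sum_z \sum_x \sum_y G x y z.
Proof. under eq_bigr do rewrite exchange_big; by rewrite exchange_big. Qed.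

Lemma term_bound (p a b c : R) : 0 <= p -> p <= a -> p <= b -> a <= c -> 0 <= a -> 0 <= b ->
  p * ln a + p * ln b - p * ln p - p * ln c <= (if 0 < c then c^-1 else 0) * a * b - p.
Proof.
move=> p0 pa pb ac a0 b0.
have [->|pn0] := eqVneq p 0.
  rewrite !mul0r addr0 !subr0.
  case: ifP => [c0|_]; last by rewrite !mul0r.
  by rewrite !mulr_ge0 // invr_ge0 ltW.
have pp : 0 < p by rewrite lt_def pn0 p0.
have ap : 0 < a by apply: lt_le_trans pa.
have bp : 0 < b by apply: lt_le_trans pb.
have cp : 0 < c by apply: lt_le_trans ac.
rewrite ifT //.
have h : ln (a * b / (p * c)) <= a * b / (p * c) - 1.
  by apply: ln_le_sub1; rewrite divr_gt0 ?mulr_gt0.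
rewrite ln_div ?posrE ?mulr_gt0 // !lnM ?posrE // in h.
have h' := ler_wpM2l (ltW pp) h.
have e : p * (a * b / (p * c) - 1) = c^-1 * a * b - p.
  by field; rewrite ?gt_eqF // mulr_gt0.
have e2 : p * ln a + p * ln b - p * ln p - p * ln c = p * (ln a + ln b - (ln p + ln c)).
  by ring.
by rewrite e2 -e.
Qed.

Lemma submod (K1 K2 K3 : finType) (X : Omega -> K1) (Y : Omega -> K2) (Z : Omega -> K3) :
  rv X -> rv Y -> rv Z ->
  ent (fun w => (X w, Y w, Z w)) + ent Z <=
  ent (fun w => (X w, Z w)) + ent (fun w => (Y w, Z w)).
Proof.
move=> hX hY hZ.
pose p x y z := pr (X @^-1` [set x] `&` Y @^-1` [set y] `&` Z @^-1` [set z]).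
pose pxz x z := pr (X @^-1` [set x] `&` Z @^-1` [set z]).
pose pyz y z := pr (Y @^-1` [set y] `&` Z @^-1` [set z]).
pose pz z := pm Z z.
have mXZ x z : measurable (X @^-1` [set x] `&` Z @^-1` [set z]) by apply: measurableI.
have mYZ y z : measurable (Y @^-1` [set y] `&` Z @^-1` [set z]) by apply: measurableI.
have m1 x z : \sum_y p x y z = pxz x z.
  rewrite /pxz -(sum_part P hY (mXZ x z)); apply: eq_bigr => y _; by rewrite /p setIAC.
have m2 y z : \sum_x p x y z = pyz y z.
  rewrite /pyz -(sum_part P hX (mYZ y z)); apply: eq_bigr => x _; by rewrite /p -setIA setIC.
have m3 z : \sum_x pxz x z = pz z.
  rewrite /pz /pm -(sum_part P hX (hZ z)); apply: eq_bigr => x _; by rewrite /pxz setIC.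
have m4 z : \sum_y pyz y z = pz z.
  rewrite /pz /pm -(sum_part P hY (hZ z)); apply: eq_bigr => y _; by rewrite /pyz setIC.
have E1 : ent (fun w => (X w, Y w, Z w)) = - \sum_x \sum_y \sum_z p x y z * ln (p x y z).
  rewrite /ent sum3; congr (- _); apply: eq_bigr => x _; apply: eq_bigr => y _.
  apply: eq_bigr => z _.
  have -> : pm (fun w => (X w, Y w, Z w)) (x, y, z) = p x y z.
    by congr pr; apply/seteqP; split => w /= => [[-> -> ->]|[[-> ->] ->]].
  by [].
have E2 : ent (fun w => (X w, Z w)) = - \sum_x \sum_y \sum_z p x y z * ln (pxz x z).
  rewrite /ent sum2; congr (- _); apply: eq_bigr => x _.
  rewrite exchange_big /=; apply: eq_bigr => z _.
  by rewrite pm_pair -mulr_suml m1.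
have E3 : ent (fun w => (Y w, Z w)) = - \sum_x \sum_y \sum_z p x y z * ln (pyz y z).
  rewrite /ent sum2; congr (- _); rewrite [RHS]exchange_big /=; apply: eq_bigr => y _.
  rewrite [RHS]exchange_big /=; apply: eq_bigr => z _.
  by rewrite pm_pair -mulr_suml m2.
have E4 : ent Z = - \sum_x \sum_y \sum_z p x y z * ln (pz z).
  rewrite /ent sum_xyz_zxy; congr (- _); apply: eq_bigr => z _.
  under eq_bigr do rewrite -mulr_suml m1.
  by rewrite -mulr_suml m3.
have mp x y z : measurable (X @^-1` [set x] `&` Y @^-1` [set y] `&` Z @^-1` [set z]).
  by apply: measurableI => //; apply: measurableI.
have H : \sum_x \sum_y \sum_z (p x y z * ln (pxz x z) + p x y z * ln (pyz y z)
     - p x y z * ln (p x y z) - p x y z * ln (pz z)) <= 0.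
  apply: (@le_trans _ _ (\sum_x \sum_y \sum_z
     ((if 0 < pz z then (pz z)^-1 else 0) * pxz x z * pyz y z - p x y z))).
    apply: ler_sum => x _; apply: ler_sum => y _; apply: ler_sum => z _.
    apply: term_bound; rewrite ?pr_ge0 //.
    - by apply: pr_mono => // w [[]].
    - by apply: pr_mono => // w [[]].
    - by apply: pr_mono => // w [].
  rewrite sum_xyz_zxy le_eqVlt; apply/orP; left; apply/eqP.
  rewrite big1 // => z _.
  under eq_bigr do rewrite sumrB; rewrite sumrB.
  under eq_bigr do rewrite -mulr_sumr m4.
  rewrite -mulr_suml -mulr_sumr m3.
  under eq_bigr do rewrite m1.
  rewrite m3; case: ifP => [pz0|/negbT]; first by rewrite mulVf ?mul1r ?subrr // gt_eqF.
  rewrite -leNgt => pz0; have -> : pz z = 0 by apply: le_anti; rewrite pz0 pr_ge0.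
  by rewrite !mul0r subrr.
rewrite E1 E2 E3 E4.
move: H; under eq_bigr do under eq_bigr do rewrite !sumrB big_split /=.
under eq_bigr do rewrite !sumrB big_split /=.
rewrite !sumrB big_split /=; lra.
Qed.

End Ent.

End P2.
Import P2.

Module P3.
Import Order.TTheory GRing.Theory Num.Theory.
Set Implicit Arguments. Unset Strict Implicit. Unset Printing Implicit Defensive.
Local Open Scope classical_set_scope.
Local Open Scope ring_scope.

Ltac rvs := repeat first [assumption | apply: rv_pair].
Ltac kerp := let w := fresh "w" in let w' := fresh "w'" in
  let H := fresh "H" in move=> w w'; split => H; congruence.

Section Shannon.
Variables (d : measure_display) (Omega : measurableType d) (R : realType).
Variable P : probability Omega R.
Local Notation pr := (pr P).
Local Notation rv := (@rv d Omega _).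
Local Notation ent := (ent P).

Lemma dmi_eq (K1 K2 K3 K4 : finType) (A : Omega -> K1) (B : Omega -> K2)
  (A' : Omega -> K3) (B' : Omega -> K4) : rv A -> rv B -> rv A' -> rv B' ->
  (forall w w', A w = A w' <-> A' w = A' w') ->
  (forall w w', B w = B w' <-> B' w = B' w') -> dmi P A B = dmi P A' B'.
Proof.
move=> hA hB hA' hB' eA eB; rewrite !dmiE //.
rewrite (ent_eq P hA hA' eA) (ent_eq P hB hB' eB) (@ent_eq _ _ _ P _ _ (fun w => (A w, B w))
  (fun w => (A' w, B' w))) //; try rvs.
move=> w w'; split => [[/eA -> /eB ->]|[/eA -> /eB ->]] //.
Qed.

Lemma dmi_ker (K1 K2 K3 : finType) (A : Omega -> K1) (B : Omega -> K2) (B' : Omega -> K3) :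
  rv A -> rv B -> rv B' -> (forall w w', B w = B w' -> B' w = B' w') -> dmi P A B' <= dmi P A B.
Proof.
move=> hA hB hB' kB; rewrite !dmiE //.
have := submod P hA hB hB'.
rewrite (@ent_eq _ _ _ P _ _ (fun w => (A w, B w, B' w)) (fun w => (A w, B w))); try rvs; last first.
  move=> w w'; split => [[e1 e2 e3]|[e1 e2]]; first by rewrite e1 e2.
  by rewrite e1 e2 (kB _ _ e2).
rewrite (@ent_eq _ _ _ P _ _ (fun w => (B w, B' w)) B); try rvs; last first.
  move=> w w'; split => [[e1 e2]|e1] //; by rewrite e1 (kB _ _ e1).
lra.
Qed.

Lemma dmi_le_ent (K1 K2 : finType) (A : Omega -> K1) (B : Omega -> K2) :
  rv A -> rv B -> dmi P A B <= ent A.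
Proof.
move=> hA hB; rewrite dmiE //.
have : ent B <= ent (fun w => (A w, B w)).
  apply: (ent_ker P); first by rvs.
  by move=> w w' [].
lra.
Qed.

Lemma ent_ge0 (K : finType) (X : Omega -> K) : rv X -> 0 <= ent X.
Proof.
move=> hX; rewrite /P2.ent oppr_ge0 sumr_le0 // => k _.
rewrite mulr_ge0_le0 ?pm_ge0 // ln_le0 //; exact: pr_le1.
Qed.

Lemma dmi_ge0 (K1 K2 : finType) (A : Omega -> K1) (B : Omega -> K2) :
  rv A -> rv B -> 0 <= dmi P A B.
Proof.
move=> hA hB; have [w0 _] := exists_omega P.
have := @dmi_ker _ _ _ A B (fun _ => tt) hA hB.
have -> : dmi P A (fun _ : Omega => tt) = 0.
  rewrite dmiE //; last by move=> k; rewrite (_ : _ @^-1` _ = setT) //; apply/seteqP; split => w //=; case: k.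
  rewrite (@ent_eq _ _ _ P _ _ (fun w => (A w, tt)) A); try rvs.
  - rewrite (_ : ent (fun _ => tt) = 0); first lra.
    rewrite /P2.ent (big_pred1 tt); last by case.
    rewrite /pm (_ : _ @^-1` _ = setT); last by apply/seteqP; split.
    by rewrite pr_setT ln1 mulr0 oppr0.
  - by move=> k; rewrite (_ : _ @^-1` _ = setT) //; apply/seteqP; split => w //=; case: k.
  - by move=> w w'; split => [[]|->].
apply; by [|move=> k; rewrite (_ : _ @^-1` _ = setT) //; apply/seteqP; split => w //=; case: k|].
Qed.

End Shannon.

End P3.
Import P3.

Module P4.
Import Order.TTheory GRing.Theory Num.Theory.
Set Implicit Arguments. Unset Strict Implicit. Unset Printing Implicit Defensive.
Local Open Scope classical_set_scope.
Local Open Scope ring_scope.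

Section Shannon2.
Variables (d : measure_display) (Omega : measurableType d) (R : realType).
Variable P : probability Omega R.
Local Notation pr := (pr P).
Local Notation rv := (@rv d Omega _).
Local Notation ent := (ent P).

Lemma chain_ineq (K1 K2 K3 K4 K5 K6 : finType) (A : Omega -> K1) (B : Omega -> K2)
  (C : Omega -> K3) (V : Omega -> K4) (W : Omega -> K5) (Q : Omega -> K6) :
  rv A -> rv B -> rv C -> rv V -> rv W -> rv Q ->
  dmi P A (fun w => (V w, Q w)) - dmi P A Q +
  (dmi P C (fun w => (W w, (Q w, A w, B w))) - dmi P C (fun w => (Q w, A w, B w))) <=
  dmi P (fun w => (A w, B w, C w)) (fun w => ((V w, W w), Q w)) -
  dmi P (fun w => (A w, B w, C w)) Q.
Proof.
move=> hA hB hC hV hW hQ.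
rewrite !dmiE; try rvs.
have s1 := submod P hA hW (rv_pair hV hQ).
have s2 := submod P hB (rv_pair hV hW) (rv_pair hA hQ).
have hZ3 : rv (fun w => (A w, B w, W w, Q w)) by rvs.
have s3 := submod P hC hV hZ3.
have e1 : ent (fun w => (W w, (Q w, A w, B w))) = ent (fun w => (A w, B w, W w, Q w)).
  by apply: ent_eq; [rvs|rvs|kerp].
have e2 : ent (fun w => (C w, (W w, (Q w, A w, B w)))) = ent (fun w => (C w, (A w, B w, W w, Q w))).
  by apply: ent_eq; [rvs|rvs|kerp].
have e3 : ent (fun w => (Q w, A w, B w)) = ent (fun w => (B w, (A w, Q w))).
  by apply: ent_eq; [rvs|rvs|kerp].
have e4 : ent (fun w => (C w, (Q w, A w, B w))) = ent (fun w => ((A w, B w, C w), Q w)).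
  by apply: ent_eq; [rvs|rvs|kerp].
have e5 : ent (fun w => ((V w, W w), Q w)) = ent (fun w => (W w, (V w, Q w))).
  by apply: ent_eq; [rvs|rvs|kerp].
have e6 : ent (fun w => ((A w, B w, C w), ((V w, W w), Q w))) =
          ent (fun w => (C w, V w, (A w, B w, W w, Q w))).
  by apply: ent_eq; [rvs|rvs|kerp].
have e7 : ent (fun w => (A w, W w, (V w, Q w))) = ent (fun w => ((V w, W w), (A w, Q w))).
  by apply: ent_eq; [rvs|rvs|kerp].
have e8 : ent (fun w => (B w, (V w, W w), (A w, Q w))) =
          ent (fun w => (V w, (A w, B w, W w, Q w))).
  by apply: ent_eq; [rvs|rvs|kerp].
rewrite e1 e2 e3 e4 e5 e6.
rewrite e7 in s1; rewrite e8 in s2.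
lra.
Qed.

Lemma fano1 (K1 K2 K3 : finType) (A : Omega -> K1) (V : Omega -> K2) (Q1 Q2 : Omega -> K3) :
  rv A -> rv V -> rv Q1 -> rv Q2 ->
  dmi P A (fun w => (V w, Q1 w)) <=
  dmi P A (fun w => (V w, Q2 w)) + (ent (fun w => (Q1 w, Q2 w)) - ent Q2).
Proof.
move=> hA hV hQ1 hQ2.
have h1 : dmi P A (fun w => (V w, Q1 w)) <= dmi P A (fun w => (V w, Q1 w, Q2 w)).
  apply: dmi_ker; try rvs; by move=> w w' [-> ->].
apply: (le_trans h1); rewrite !dmiE; try rvs.
have s1 := submod P hV hQ1 hQ2.
have k1 : ent (fun w => (A w, (V w, Q2 w))) <= ent (fun w => (A w, (V w, Q1 w, Q2 w))).
  apply: (ent_ker P); first by rvs.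
  by move=> w w' [-> -> _ ->].
lra.
Qed.

Lemma negxlnx (p : R) : 0 <= p -> - (p * ln p) <= 2 * Num.sqrt p.
Proof.
move=> p0; have [->|pn0] := eqVneq p 0; first by rewrite mul0r oppr0 mulr_ge0 ?sqrtr_ge0.
have pp : 0 < p by rewrite lt_def pn0 p0.
set s := Num.sqrt p.
have sp : 0 < s by rewrite sqrtr_gt0.
have ps : p = s * s by rewrite -expr2 sqr_sqrtr.
have h : ln (s^-1) <= s^-1 - 1 by apply: ln_le_sub1; rewrite invr_gt0.
rewrite lnV ?posrE // in h.
have h2 : s * s * (- ln s) <= s * s * (s^-1 - 1).
  by apply: ler_wpM2l => //; rewrite mulr_ge0 // ltW.
have e : s * s * (s^-1 - 1) = s - s * s by rewrite mulrBr mulr1 -mulrA mulfV ?mulr1 // gt_eqF.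
rewrite e in h2.
rewrite ps lnM ?posrE //.
have : 0 <= s * s by rewrite mulr_ge0 // ltW.
nra.
Qed.

Lemma fano_term (p q de : R) (b : bool) : 0 <= p -> p <= q -> q <= 1 -> 0 <= de ->
  (if b then q <= p + de else p <= de) -> p * ln q - p * ln p <= de + 2 * Num.sqrt de.
Proof.
move=> p0 pq q1 de0 hb.
have sq0 : 0 <= Num.sqrt de by apply: sqrtr_ge0.
have [->|pn0] := eqVneq p 0; first by rewrite !mul0r subrr addr_ge0 // mulr_ge0.
have pp : 0 < p by rewrite lt_def pn0 p0.
have qp : 0 < q by apply: lt_le_trans pq.
case: b hb => hb.
  have h : ln (q / p) <= q / p - 1 by apply: ln_le_sub1; rewrite divr_gt0.
  rewrite ln_div ?posrE // in h.
  have h2 := ler_wpM2l (ltW pp) h.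
  have e : p * (q / p - 1) = q - p by field; rewrite gt_eqF.
  rewrite e in h2.
  have e2 : p * ln q - p * ln p = p * (ln q - ln p) by ring.
  rewrite e2; lra.
have lq : ln q <= 0 by apply: ln_le0.
have h1 : p * ln q <= 0 by rewrite mulr_ge0_le0 // ltW.
have h2 := negxlnx p0.
have h3 : Num.sqrt p <= Num.sqrt de by rewrite ler_sqrt.
lra.
Qed.

Lemma rv_neq (K : finType) (Q1 Q2 : Omega -> K) : rv Q1 -> rv Q2 ->
  measurable [set w | Q1 w <> Q2 w].
Proof.
move=> h1 h2; have := rv_pre [set u : K * K | u.1 <> u.2] (rv_pair h1 h2).
by rewrite (_ : _ @^-1` _ = [set w | Q1 w <> Q2 w]).
Qed.

Lemma fano2 (K : finType) (Q1 Q2 : Omega -> K) : rv Q1 -> rv Q2 ->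
  ent (fun w => (Q1 w, Q2 w)) - ent Q2 <=
  (#|K|%:R ^+ 2) * (pr [set w | Q1 w <> Q2 w] + 2 * Num.sqrt (pr [set w | Q1 w <> Q2 w])).
Proof.
move=> h1 h2; set de := pr _.
have mD := rv_neq h1 h2.
have de0 : 0 <= de by apply: pr_ge0.
rewrite /P2.ent sum2 opprK.
have -> : \sum_y pm P Q2 y * ln (pm P Q2 y) =
   \sum_x \sum_y pr (Q1 @^-1` [set x] `&` Q2 @^-1` [set y]) * ln (pm P Q2 y).
  rewrite exchange_big /=; apply: eq_bigr => y _; rewrite -mulr_suml; congr (_ * _).
  rewrite /pm -(sum_part P h1 (h2 y)); apply: eq_bigr => x _; by rewrite setIC.
rewrite addrC -sumrB.
under eq_bigr do rewrite -sumrB.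
have -> : #|K|%:R ^+ 2 * (de + 2 * Num.sqrt de) =
   \sum_(x : K) \sum_(y : K) (de + 2 * Num.sqrt de).
  by rewrite sumr_const sumr_const -mulrnA -[RHS]mulr_natr natrM expr2 mulrC.
apply: ler_sum => x _; apply: ler_sum => y _.
rewrite pm_pair.
have mxy : measurable (Q1 @^-1` [set x] `&` Q2 @^-1` [set y]) by apply: measurableI.
apply: (@fano_term _ _ _ (x == y)).
- exact: pr_ge0.
- by apply: pr_mono => // w [].
- exact: pr_le1.
- done.
case: eqP => [<-|nxy].
  rewrite /pm.
  have sub : Q2 @^-1` [set x] `<=` (Q1 @^-1` [set x] `&` Q2 @^-1` [set x]) `|` [set w | Q1 w <> Q2 w].
    move=> w /= Q2w; case: (eqVneq (Q1 w) x) => [e|ne]; first by left.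
    by right; rewrite Q2w; apply/eqP.
  have mxx : measurable (Q1 @^-1` [set x] `&` Q2 @^-1` [set x]) by apply: measurableI.
  apply: le_trans (pr_mono P (h2 x) (measurableU _ _ mxx mD) sub) _.
  exact: pr_Ule.
apply: pr_mono => // w /= [-> ->]; by apply/eqP/eqP.
Qed.

End Shannon2.

End P4.
Import P4.

Module P5.
Import Order.TTheory GRing.Theory Num.Theory.
Set Implicit Arguments. Unset Strict Implicit. Unset Printing Implicit Defensive.
Local Open Scope classical_set_scope.
Local Open Scope ring_scope.

Section SA.
Variables (T : Type) (G : set (set T)).
Hypothesis hG : sigma_algebra setT G.

Lemma sa0 : G set0. Proof. by case: hG. Qed.
Lemma saT : G setT. Proof. by case: hG => G0 GC _; have := GC _ G0; rewrite setD0. Qed.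
Lemma saC A : G A -> G (~` A). Proof. by case: hG => _ GC _ /GC; rewrite setTD. Qed.
Lemma saU A B : G A -> G B -> G (A `|` B).
Proof.
case: hG => G0 _ GU hA hB; rewrite -bigcup2E; apply: GU => -[|[|n]] //=.
Qed.
Lemma saI A B : G A -> G B -> G (A `&` B).
Proof.
move=> hA hB; rewrite -[A `&` B]setCK setCI; apply: saC; apply: saU; exact: saC.
Qed.

Definition fq (K : Type) (h : T -> K) := forall k, G (h @^-1` [set k]).

Lemma fq_seq (K : eqType) (h : T -> K) (s : seq K) : fq h -> G (h @^-1` [set k | k \in s]).
Proof.
move=> hh; elim: s => [|a s IH].
  rewrite (_ : _ @^-1` _ = set0); first exact: sa0.
  by apply/seteqP; split => w //=.
rewrite (_ : _ @^-1` _ = h @^-1` [set a] `|` h @^-1` [set k | k \in s]).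
  exact: saU.
apply/seteqP; split => w /=; rewrite inE.
  by case/orP => [/eqP ->|ws]; [left|right].
by case => [->|ws]; rewrite ?eqxx ?ws ?orbT.
Qed.

Lemma fq_pre (K : finType) (h : T -> K) (A : set K) : fq h -> G (h @^-1` A).
Proof.
move=> hh; rewrite (_ : A = [set k | k \in [seq k <- enum K | `[< A k >]]]).
  exact: fq_seq.
apply/seteqP; split => k /=; rewrite mem_filter mem_enum andbT.
  by move=> Ak; apply/asboolP.
by move/asboolP.
Qed.

Lemma fq_comp (K K' : finType) (h : T -> K) (f : K -> K') : fq h -> fq (f \o h).
Proof. by move=> hh k; rewrite comp_preimage; exact: fq_pre. Qed.

Lemma fq_pair (K1 K2 : Type) (X : T -> K1) (Y : T -> K2) :
  fq X -> fq Y -> fq (fun w => (X w, Y w)).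
Proof.
move=> hX hY [a b]; rewrite (_ : _ @^-1` _ = X @^-1` [set a] `&` Y @^-1` [set b]).
  exact: saI.
by apply/seteqP; split => w /= => [[-> ->]|[-> ->]].
Qed.

Lemma fq_const (K : Type) (c : K) : fq (fun _ => c).
Proof.
move=> k; have [->|nk] := pselect (c = k).
  rewrite (_ : _ @^-1` _ = setT); first exact: saT. by apply/seteqP; split.
rewrite (_ : _ @^-1` _ = set0); first exact: sa0. by apply/seteqP; split.
Qed.

End SA.

Lemma fq_sub (T K : Type) (G G' : set (set T)) (h : T -> K) : G `<=` G' -> fq G h -> fq G' h.
Proof. by move=> GG hh k; apply: GG. Qed.

Lemma quant_enum (d : measure_display) (T : measurableType d) (G : set (set T)) (K : finType) (h : T -> K) :
  fq G h -> quantization G (enum_rank \o h).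
Proof.
move=> hh k; rewrite (_ : _ @^-1` _ = h @^-1` [set enum_val k]); first exact: hh.
apply/seteqP; split => w /=.
  by move=> <-; rewrite enum_rankK.
by move=> ->; rewrite enum_valK.
Qed.

Lemma ker_enum (T : Type) (K : finType) (h : T -> K) (w w' : T) :
  (enum_rank \o h) w = (enum_rank \o h) w' <-> h w = h w'.
Proof. by split => /= [/enum_rank_inj|->]. Qed.

Section Sups.
Variables (d : measure_display) (Omega : measurableType d) (R : realType).
Variable P : probability Omega R.
Local Notation pr := (pr P).
Local Notation rv := (@rv d Omega _).
Local Notation ent := (ent P).

Definition J2 (G : set (set Omega)) (K : finType) (A : Omega -> K) : \bar R :=
  ereal_sup [set x | exists n (q : Omega -> 'I_n),
       quantization G q /\ x = (dmi P A q)%:E].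
Definition J1 (G : set (set Omega)) (K1 K2 : finType) (A : Omega -> K1) (B : Omega -> K2) : \bar R :=
  ereal_sup [set x | exists n (q : Omega -> 'I_n),
       quantization G q /\ x = (dmi P A (fun w => (B w, q w)))%:E].

Lemma cmi_finE G (K1 K2 : finType) (A : Omega -> K1) (B : Omega -> K2) :
  cmi_fin P G A B = (J1 G A B - J2 G A)%E.
Proof. by []. Qed.

Variable G : set (set Omega).
Hypothesis hG : sigma_algebra setT G.
Hypothesis hGm : G `<=` measurable.

Lemma fq_rv (K : Type) (h : Omega -> K) : fq G h -> rv h.
Proof. by move=> hh k; apply: hGm. Qed.

Lemma J2_ub (K K' : finType) (A : Omega -> K) (h : Omega -> K') : rv A -> fq G h ->
  ((dmi P A h)%:E <= J2 G A)%E.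
Proof.
move=> hA hh; apply: ereal_sup_ubound; exists #|K'|, (enum_rank \o h); split.
  exact: quant_enum.
congr EFin; apply: dmi_eq => //; first exact: fq_rv.
- exact: rv_comp (fq_rv hh).
- by move=> w w'; rewrite ker_enum.
Qed.

Lemma J1_ub (K K' K'' : finType) (A : Omega -> K) (B : Omega -> K'') (h : Omega -> K') :
  rv A -> rv B -> fq G h -> ((dmi P A (fun w => (B w, h w)))%:E <= J1 G A B)%E.
Proof.
move=> hA hB hh; apply: ereal_sup_ubound; exists #|K'|, (enum_rank \o h); split.
  exact: quant_enum.
have hh' := fq_rv hh.
have hc : rv (enum_rank \o h) by exact: rv_comp.
congr EFin; apply: dmi_eq; try rvs; first by move=> w w'.
move=> w w'; split => /= [[-> ->]|[-> /enum_rank_inj ->]] //.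
Qed.

Lemma J2_le (K : finType) (A : Omega -> K) : rv A -> (J2 G A <= (ent A)%:E)%E.
Proof.
move=> hA; apply: ge_ereal_sup => x [n [q [qq ->]]]; rewrite lee_fin.
apply: dmi_le_ent => //; exact: fq_rv.
Qed.

Lemma J1_le (K K' : finType) (A : Omega -> K) (B : Omega -> K') : rv A -> rv B ->
  (J1 G A B <= (ent A)%:E)%E.
Proof.
move=> hA hB; apply: ge_ereal_sup => x [n [q [qq ->]]]; rewrite lee_fin.
apply: dmi_le_ent => //; apply: rv_pair => //; exact: fq_rv.
Qed.

Lemma J2_fin (K : finType) (A : Omega -> K) : rv A -> J2 G A \is a fin_num.
Proof.
move=> hA; rewrite fin_numElt; apply/andP; split.
  apply: (@lt_le_trans _ _ (dmi P A (fun _ => tt))%:E); first exact: ltNyr.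
  apply: J2_ub => //; exact: fq_const.
by apply: (le_lt_trans (J2_le hA)); exact: ltry.
Qed.

Lemma J1_fin (K K' : finType) (A : Omega -> K) (B : Omega -> K') : rv A -> rv B ->
  J1 G A B \is a fin_num.
Proof.
move=> hA hB; rewrite fin_numElt; apply/andP; split.
  apply: (@lt_le_trans _ _ (dmi P A (fun w => (B w, tt)))%:E); first exact: ltNyr.
  apply: J1_ub => //; exact: fq_const.
by apply: (le_lt_trans (J1_le hA hB)); exact: ltry.
Qed.

Lemma J2_approx (K : finType) (A : Omega -> K) (e : R) : rv A -> 0 < e ->
  exists n (q : Omega -> 'I_n), quantization G q /\ fine (J2 G A) - e < dmi P A q.
Proof.
move=> hA e0; have [x [n [q [qq ->]]]] := ub_ereal_sup_adherent e0 (J2_fin hA).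
move=> h; exists n, q; split => //; rewrite -lte_fin EFinB fineK //; exact: J2_fin.
Qed.

Lemma J1_approx (K K' : finType) (A : Omega -> K) (B : Omega -> K') (e : R) :
  rv A -> rv B -> 0 < e ->
  exists n (q : Omega -> 'I_n), quantization G q /\
     fine (J1 G A B) - e < dmi P A (fun w => (B w, q w)).
Proof.
move=> hA hB e0; have [x [n [q [qq ->]]]] := ub_ereal_sup_adherent e0 (J1_fin hA hB).
move=> h; exists n, q; split => //; rewrite -lte_fin EFinB fineK //; exact: J1_fin.
Qed.

End Sups.

End P5.
Import P5.

Module P6.
Import Order.TTheory GRing.Theory Num.Theory.
Set Implicit Arguments. Unset Strict Implicit. Unset Printing Implicit Defensive.
Local Open Scope classical_set_scope.
Local Open Scope ring_scope.

Section Approx.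
Variables (d : measure_display) (Omega : measurableType d) (R : realType).
Variable P : probability Omega R.
Local Notation pr := (pr P).
Local Notation rv := (@rv d Omega _).
Variables (GW GU : set (set Omega)).
Hypotheses (hW : sigma_algebra setT GW) (hU : sigma_algebra setT GU).
Hypotheses (hWm : GW `<=` measurable) (hUm : GU `<=` measurable).

Definition Alg (S : set Omega) := exists (K1 K2 : finType) (q0 : Omega -> K1) (r : Omega -> K2)
  (B : pred (K1 * K2)), fq GW q0 /\ fq GU r /\ S = [set w | B (q0 w, r w)].

Lemma fq_bool (G : set (set Omega)) (hG : sigma_algebra setT G) S : G S ->
  fq G (fun w => `[< S w >]).
Proof.
move=> GS [].
  rewrite (_ : _ @^-1` _ = S) //; apply/seteqP; split => w /=; by move/asboolP.
rewrite (_ : _ @^-1` _ = ~` S); first exact: saC.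
apply/seteqP; split => w /=.
  by move=> h Sw; move: h; rewrite asboolT.
by move=> nS; apply/negbTE/asboolPn.
Qed.

Lemma alg_W S : GW S -> Alg S.
Proof.
move=> hS; exists bool, unit, (fun w => `[< S w >]), (fun _ => tt), (fun u => u.1).
split; first exact: fq_bool.
split; first exact: fq_const.
by apply/seteqP; split => w /=; move/asboolP.
Qed.

Lemma alg_U S : GU S -> Alg S.
Proof.
move=> hS; exists unit, bool, (fun _ => tt), (fun w => `[< S w >]), (fun u => u.2).
split; first exact: fq_const.
split; first exact: fq_bool.
by apply/seteqP; split => w /=; move/asboolP.
Qed.

Lemma alg_C S : Alg S -> Alg (~` S).
Proof.
move=> [K1 [K2 [q0 [r [B [h1 [h2 ->]]]]]]].
exists K1, K2, q0, r, (predC B); split => //; split => //.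
by apply/seteqP; split => w /=; move/negP.
Qed.

Lemma alg_U2 S S' : Alg S -> Alg S' -> Alg (S `|` S').
Proof.
move=> [K1 [K2 [q0 [r [B [h1 [h2 ->]]]]]]] [K1' [K2' [q0' [r' [B' [h1' [h2' ->]]]]]]].
exists (K1 * K1')%type, (K2 * K2')%type, (fun w => (q0 w, q0' w)), (fun w => (r w, r' w)),
  (fun u => B (u.1.1, u.2.1) || B' (u.1.2, u.2.2)).
split; first exact: fq_pair.
split; first exact: fq_pair.
by apply/seteqP; split => w /=; move/orP.
Qed.

Lemma alg_0 : Alg set0.
Proof.
exists unit, unit, (fun _ => tt), (fun _ => tt), pred0.
split; first exact: fq_const.
split; first exact: fq_const.
by apply/seteqP; split.
Qed.

Lemma alg_m S : Alg S -> measurable S.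
Proof.
move=> [K1 [K2 [q0 [r [B [h1 [h2 ->]]]]]]].
have := rv_pre [set u | B u] (rv_pair (fq_rv hWm h1) (fq_rv hUm h2)).
by rewrite (_ : _ @^-1` _ = [set w | B (q0 w, r w)]).
Qed.

Lemma alg_bigU n (F : nat -> set Omega) : (forall k, (k < n)%N -> Alg (F k)) ->
  Alg (\big[setU/set0]_(k < n) F k).
Proof.
elim: n => [|n IH] H; first by rewrite big_ord0; exact: alg_0.
rewrite big_ord_recr /=; apply: alg_U2; first by apply: IH => k kn; apply: H; exact: ltnW.
exact: H.
Qed.

Definition sdiff (A B : set Omega) := (A `\` B) `|` (B `\` A).

Definition Dap (S : set Omega) := measurable S /\
  forall e : R, 0 < e -> exists S0, Alg S0 /\ pr (sdiff S S0) <= e.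

Lemma sdiff_m A B : measurable A -> measurable B -> measurable (sdiff A B).
Proof. move=> mA mB; apply: measurableU; exact: measurableD. Qed.

Lemma pr_bigU n (F : nat -> set Omega) : (forall k, measurable (F k)) ->
  pr (\big[setU/set0]_(k < n) F k) <= \sum_(k < n) pr (F k).
Proof.
move=> mF; elim: n => [|n IH]; first by rewrite !big_ord0 pr_set0.
rewrite !big_ord_recr /=; apply: le_trans (pr_Ule _ _ _) _.
- by apply: bigsetU_measurable => k _.
- exact: mF.
by rewrite lerD2r.
Qed.

Lemma Dap_sigma : sigma_algebra setT Dap.
Proof.
split.
- split => // e e0; exists set0; split; first exact: alg_0.
  by rewrite (_ : sdiff _ _ = set0) ?pr_set0 ?ltW //; apply/seteqP; split => w // [[]|[]].
- move=> A [mA HA]; split; first exact: measurableD.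
  move=> e e0; have [S0 [aS0 hS0]] := HA e e0; exists (~` S0); split; first exact: alg_C.
  rewrite (_ : sdiff _ _ = sdiff A S0) //.
  by rewrite /sdiff setTD !setDE !setCK setUC; congr (_ `|` _); rewrite setIC.
move=> A HA; have mA k := (HA k).1.
have mUA : measurable (\bigcup_k A k) by apply: bigcupT_measurable.
split => // e e0.
pose F N := \big[setU/set0]_(i < N.+1) A i.
have mF N : measurable (F N) by apply: bigsetU_measurable.
have ndF : nondecreasing_seq F.
  by move=> m n mn; apply/subsetPset/subset_bigsetU; rewrite ltnS.
have UF : \bigcup_N F N = \bigcup_k A k := bigcup_bigsetU_bigcup A.
have cv := nondecreasing_cvg_mu mF (eq_ind_r _ mUA UF) ndF.
rewrite UF in cv.
have cv' : (fun N => P (F N)) @ \oo --> (pr (\bigcup_k A k))%:E.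
  by rewrite -(prE P mUA); exact: cv.
move/fine_cvgP: cv' => [_ {}cv].
have e2 : 0 < e / 2 by rewrite divr_gt0.
have [N _ HN] := (cvgrPdist_lt _ _).1 cv (e / 2) e2.
have hN := HN N (leqnn N); rewrite /= in hN.
have hN' : pr (\bigcup_k A k) - pr (F N) <= e / 2.
  by apply: le_trans (ltW hN); exact: ler_norm.
have n0 : 0 < (N.+1)%:R :> R by rewrite ltr0n.
pose e' := e / 2 / (N.+1)%:R.
have e'0 : 0 < e' by rewrite divr_gt0.
have ch : forall k, exists S0, Alg S0 /\ pr (sdiff (A k) S0) <= e' by move=> k; exact: (HA k).2.
have [S0f hS0f] := choice ch.
have mS0 k : measurable (S0f k) := alg_m (hS0f k).1.
exists (\big[setU/set0]_(i < N.+1) S0f i); split.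
  by apply: alg_bigU => k _; case: (hS0f k).
have mS0U : measurable (\big[setU/set0]_(i < N.+1) S0f i) by apply: bigsetU_measurable.
have mD1 : measurable (\bigcup_k A k `\` F N) by apply: measurableD.
have mD2 : measurable (\big[setU/set0]_(i < N.+1) sdiff (A i) (S0f i)).
  by apply: bigsetU_measurable => i _; apply: sdiff_m.
have sub : sdiff (\bigcup_k A k) (\big[setU/set0]_(i < N.+1) S0f i) `<=`
   (\bigcup_k A k `\` F N) `|` \big[setU/set0]_(i < N.+1) sdiff (A i) (S0f i).
  rewrite /F -!bigcup_mkord -(bigcup_mkord _ (fun i => sdiff (A i) (S0f i))) => w; rewrite /sdiff.
  case=> [[[k _ Akw] nS]|[[k kN Skw] nA]].
    have [[i iN Aiw]|nF] := pselect ((\bigcup_(i < N.+1) A i) w).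
      right; exists i => //; left; split => // Siw; apply: nS; by exists i.
    by left; split => //; exists k.
  right; exists k => //; right; split => // Akw; apply: nA; by exists k.
apply: le_trans (pr_mono P (sdiff_m mUA mS0U) (measurableU _ _ mD1 mD2) sub) _.
apply: le_trans (pr_Ule P mD1 mD2) _.
have h1 : pr (\bigcup_k A k `\` F N) = pr (\bigcup_k A k) - pr (F N).
  have FA : F N `<=` \bigcup_k A k by rewrite -UF; exact: bigcup_sup.
  have dj : F N `&` (\bigcup_k A k `\` F N) = set0.
    by apply/seteqP; split => w // [? []].
  have := pr_U P (mF N) mD1 dj.
  rewrite setDUK // => ->; ring.
have h2 : pr (\big[setU/set0]_(i < N.+1) sdiff (A i) (S0f i)) <= e / 2.
  apply: le_trans (pr_bigU N.+1 (fun i => sdiff_m (mA i) (mS0 i))) _.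
  apply: (@le_trans _ _ (\sum_(i < N.+1) e')).
    by apply: ler_sum => i _; exact: (hS0f i).2.
  by rewrite sumr_const card_ord /e' -[X in X <= _]mulr_natr divfK ?lt0r_neq0.
rewrite h1; lra.
Qed.

Lemma alg_fam n (F : nat -> set Omega) : (forall k, (k < n)%N -> Alg (F k)) ->
  exists (K1 K2 : finType) (q0 : Omega -> K1) (r : Omega -> K2) (B : nat -> pred (K1 * K2)),
    fq GW q0 /\ fq GU r /\ forall k, (k < n)%N -> F k = [set w | B k (q0 w, r w)].
Proof.
elim: n => [|n IH] H.
  exists unit, unit, (fun _ => tt), (fun _ => tt), (fun _ => pred0).
  by split; [exact: fq_const|split; [exact: fq_const|]].
have [K1 [K2 [q0 [r [B [h1 [h2 hB]]]]]]] : exists (K1 K2 : finType) (q0 : Omega -> K1)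
  (r : Omega -> K2) (B : nat -> pred (K1 * K2)),
    fq GW q0 /\ fq GU r /\ forall k, (k < n)%N -> F k = [set w | B k (q0 w, r w)].
  by apply: IH => k kn; apply: H; exact: ltnW.
have [K1' [K2' [q0' [r' [B' [h1' [h2' hB']]]]]]] := H n (ltnSn n).
exists (K1 * K1')%type, (K2 * K2')%type, (fun w => (q0 w, q0' w)), (fun w => (r w, r' w)),
  (fun k u => if (k < n)%N then B k (u.1.1, u.2.1) else B' (u.1.2, u.2.2)).
split; first exact: fq_pair.
split; first exact: fq_pair.
move=> k; rewrite ltnS leq_eqVlt => /orP[/eqP ->|kn].
  by rewrite ltnn hB'.
by rewrite kn hB.
Qed.

Lemma Dap_alg S : Alg S -> Dap S.
Proof.
move=> aS; split; first exact: alg_m.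
move=> e e0; exists S; split => //.
by rewrite (_ : sdiff S S = set0) ?pr_set0 ?ltW //; apply/seteqP; split => w // [[]|[]].
Qed.

Lemma gen_Dap : <<s GW `|` GU >> `<=` Dap.
Proof.
apply: smallest_sub; first exact: Dap_sigma.
by move=> S [/alg_W|/alg_U]; apply: Dap_alg.
Qed.

Lemma approx_quant (GW' : set (set Omega)) : GW' `<=` <<s GW `|` GU >> ->
  forall n (q : Omega -> 'I_n), quantization GW' q -> forall e : R, 0 < e ->
  exists (K1 K2 : finType) (q0 : Omega -> K1) (r : Omega -> K2) (g : K1 * K2 -> 'I_n),
    fq GW q0 /\ fq GU r /\ pr [set w | q w <> g (q0 w, r w)] <= e.
Proof.
move=> sW' n q hq e e0.
have hD k : Dap (q @^-1` [set k]) by apply: gen_Dap; apply: sW'; exact: hq.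
have [w0 _] := exists_omega P.
have n0 : (0 < n)%N by case: (q w0) => m mn; exact: leq_ltn_trans (leq0n m) mn.
have n0' : 0 < n%:R :> R by rewrite ltr0n.
pose e' := e / n%:R.
have e'0 : 0 < e' by rewrite divr_gt0.
have ch : forall k : 'I_n, exists S0, Alg S0 /\ pr (sdiff (q @^-1` [set k]) S0) <= e'.
  by move=> k; exact: (hD k).2.
have [S0f hS0f] := choice ch.
pose Fn (k : nat) := S0f (insubd (q w0) k).
have [K1 [K2 [q0 [r [B [h1 [h2 hB]]]]]]] := @alg_fam n Fn (fun k _ => (hS0f _).1).
pose g u := odflt (q w0) [pick k : 'I_n | B k u].
exists K1, K2, q0, r, g; split => //; split => //.
have hFn (k : 'I_n) : S0f k = [set w | B k (q0 w, r w)].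
  by rewrite -(hB k (ltn_ord k)) /Fn valKd.
pose D (k : nat) := sdiff (q @^-1` [set insubd (q w0) k]) (Fn k).
have mq : rv q by move=> k; exact: (hD k).1.
have mD k : measurable (D k).
  apply: sdiff_m; first exact: mq.
  exact: alg_m (hS0f _).1.
have sub : [set w | q w <> g (q0 w, r w)] `<=` \big[setU/set0]_(k < n) D k.
  rewrite -bigcup_mkord => w /= ne.
  case: (boolP (B (q w) (q0 w, r w))) => hBw.
    move: ne; rewrite /g; case: pickP => [j Bj|/(_ (q w))]; last by rewrite hBw.
    move=> /= ne; exists (val j); first exact: ltn_ord.
    right; rewrite /D /Fn valKd; split.
      by rewrite hFn.
    by move=> /= qj; apply: ne; rewrite qj.
  exists (val (q w)); first exact: ltn_ord.
  left; rewrite /D /Fn valKd; split => //=.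
  rewrite hFn /=; exact/negP.
have mne : measurable [set w | q w <> g (q0 w, r w)].
  apply: (rv_neq mq); apply: rv_comp; apply: rv_pair; [exact: (fq_rv hWm h1)|exact: (fq_rv hUm h2)].
have mBU : measurable (\big[setU/set0]_(k < n) D k).
  by apply: bigsetU_measurable => k _; exact: mD.
apply: le_trans (pr_mono P mne mBU sub) _.
apply: le_trans (pr_bigU n mD) _.
apply: (@le_trans _ _ (\sum_(k < n) e')).
  apply: ler_sum => k _; have := (hS0f k).2; rewrite /D /Fn valKd; done.
by rewrite sumr_const card_ord /e' -[X in X <= _]mulr_natr divfK ?lt0r_neq0.
Qed.

End Approx.

End P6.
Import P6.

Module P7.
Import Order.TTheory GRing.Theory Num.Theory.
Set Implicit Arguments. Unset Strict Implicit. Unset Printing Implicit Defensive.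
Local Open Scope classical_set_scope.
Local Open Scope ring_scope.

Lemma delta_choice (R : realType) (c e : R) : 0 <= c -> 0 < e ->
  exists de : R, 0 < de /\ c * (de + 2 * Num.sqrt de) <= e.
Proof.
move=> c0 e0; pose m := Num.min e 1.
have m0 : 0 < m by rewrite lt_min e0 ltr01.
have me : m <= e by rewrite ge_min lexx.
have m1 : m <= 1 by rewrite ge_min lexx orbT.
pose u := m / (3 * (c + 1)).
have c1 : 0 < 3 * (c + 1) by rewrite mulr_gt0 // ltr_wpDl.
have u0 : 0 < u by rewrite divr_gt0.
have hu : u * (3 * (c + 1)) = m by rewrite divfK // gt_eqF.
exists (u ^+ 2); split; first by rewrite exprn_gt0.
rewrite sqrtr_sqr ger0_norm ?ltW //.
have u1 : u <= 1 by nra.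
have : u ^+ 2 <= u by rewrite expr2; nra.
nra.
Qed.

Section Core.
Variables (d : measure_display) (Omega : measurableType d) (R : realType).
Variable P : probability Omega R.
Local Notation pr := (pr P).
Local Notation rv := (@rv d Omega _).
Local Notation ent := (ent P).
Variables (GU GU1 GU2 GV' GV GW GW' : set (set Omega)).
Hypotheses (sU : sigma_algebra setT GU) (sU1 : sigma_algebra setT GU1)
  (sU2 : sigma_algebra setT GU2) (sV' : sigma_algebra setT GV') (sV : sigma_algebra setT GV)
  (sW : sigma_algebra setT GW) (sW' : sigma_algebra setT GW').
Hypotheses (mU : GU `<=` measurable) (mU1 : GU1 `<=` measurable) (mU2 : GU2 `<=` measurable)
  (mV' : GV' `<=` measurable) (mV : GV `<=` measurable) (mW : GW `<=` measurable)
  (mW' : GW' `<=` measurable).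
Hypotheses (iU1 : GU1 `<=` GU) (iU2 : GU2 `<=` GU) (iV : GV' `<=` GV) (iW : GW `<=` GW')
  (iU1W : GU1 `<=` GW') (iW' : GW' `<=` <<s GW `|` GU1 >>).

Lemma core n1 m1 n2 m2 (a1 : Omega -> 'I_n1) (v' : Omega -> 'I_m1) (a2 : Omega -> 'I_n2)
  (v : Omega -> 'I_m2) :
  quantization GU1 a1 -> quantization GV' v' -> quantization GU2 a2 -> quantization GV v ->
  (cmi_fin P GW a1 v' + cmi_fin P GW' a2 v <= cmi P GU GV GW)%E.
Proof.
move=> qa1 qv' qa2 qv.
have ra1 : rv a1 := fq_rv mU1 qa1.
have rv' : rv v' := fq_rv mV' qv'.
have ra2 : rv a2 := fq_rv mU2 qa2.
have rv_ : rv v := fq_rv mV qv.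
rewrite !cmi_finE.
rewrite -(fineK (J1_fin P sW mW ra1 rv')) -(fineK (J2_fin P sW mW ra1)).
rewrite -(fineK (J1_fin P sW' mW' ra2 rv_)) -(fineK (J2_fin P sW' mW' ra2)).
set s1 := fine (J1 P GW a1 v'); set t1 := fine (J2 P GW a1).
set s2 := fine (J1 P GW' a2 v); set t2 := fine (J2 P GW' a2).
rewrite -!EFinB -EFinD.
apply/lee_addgt0Pr => e e0.
pose eps := e / 4.
have eps0 : 0 < eps by rewrite divr_gt0.
have [nq1 [q1 [qq1 hq1]]] := J1_approx P sW mW ra1 rv' eps0.
have rq1 : rv q1 := fq_rv mW qq1.
have [nq' [q' [qq' hq']]] := J1_approx P sW' mW' ra2 rv_ eps0.
have rq' : rv q' := fq_rv mW' qq'.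
have [de [de0 hde]] := delta_choice (sqr_ge0 (nq'%:R : R)) eps0.
have [K1 [K2 [q0 [r [g [fq0 [fr hpr]]]]]]] := approx_quant P sW sU1 mW mU1 iW' qq' de0.
have rq0 : rv q0 := fq_rv mW fq0.
have rr : rv r := fq_rv mU1 fr.
pose q'' := fun w => g (q0 w, r w).
have rq'' : rv q'' by apply: (rv_comp g (rv_pair rq0 rr)).
have hfano : dmi P a2 (fun w => (v w, q' w)) <= dmi P a2 (fun w => (v w, q'' w)) + eps.
  apply: le_trans (fano1 P ra2 rv_ rq' rq'') _; rewrite lerD2l.
  apply: le_trans (fano2 P rq' rq'') _; rewrite card_ord.
  apply: le_trans hde; apply: ler_wpM2l; first exact: sqr_ge0.
  have hs : Num.sqrt (pr [set w | q' w <> q'' w]) <= Num.sqrt de by rewrite ler_sqrt // ltW.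
  by apply: lerD => //; rewrite ler_pM2l.
pose T3 := fun w => (a1 w, r w, a2 w).
pose T2 := fun w => (v' w, v w).
have fT3 : fq GU T3 := fq_pair sU (fq_pair sU (fq_sub iU1 qa1) (fq_sub iU1 fr)) (fq_sub iU2 qa2).
have fT2 : fq GV T2 := fq_pair sV (fq_sub iV qv') qv.
pose QU := enum_rank \o T3.
pose QV := enum_rank \o T2.
have qQU : quantization GU QU := quant_enum fT3.
have qQV : quantization GV QV := quant_enum fT2.
have rQU : rv QU := fq_rv mU qQU.
have rQV : rv QV := fq_rv mV qQV.
have rT3 : rv T3 by rvs.
have rT2 : rv T2 by rvs.
have [nJ [qJ [qqJ hqJ]]] := J2_approx P sW mW rQU eps0.
have rqJ : rv qJ := fq_rv mW qqJ.
pose Q := fun w => (qJ w, q0 w, q1 w).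
have fQ : fq GW Q := fq_pair sW (fq_pair sW qqJ fq0) qq1.
have rQ : rv Q by rvs.
have ha : dmi P a1 (fun w => (v' w, q1 w)) <= dmi P a1 (fun w => (v' w, Q w)).
  apply: dmi_ker; try rvs; by move=> w w' [-> _ _ ->].
have hb : dmi P a1 Q <= t1.
  by rewrite -lee_fin /t1 fineK ?(J2_fin P sW mW ra1) //; apply: J2_ub.
have hc : dmi P a2 (fun w => (v w, q'' w)) <= dmi P a2 (fun w => (v w, (Q w, a1 w, r w))).
  apply: dmi_ker; try rvs; by move=> w w' [-> [_ e0' _] _ e2]; rewrite /q'' e0' e2.
have fQ' : fq GW' (fun w => (Q w, a1 w, r w)).
  apply: (fq_pair sW'); first apply: (fq_pair sW').
  - exact: (fq_sub iW fQ).
  - exact: (fq_sub iU1W qa1).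
  - exact: (fq_sub iU1W fr).
have hd : dmi P a2 (fun w => (Q w, a1 w, r w)) <= t2.
  by rewrite -lee_fin /t2 fineK ?(J2_fin P sW' mW' ra2) //; apply: J2_ub.
set s3 := fine (J1 P GW QU QV); set t3 := fine (J2 P GW QU).
have he : dmi P QU (fun w => (QV w, Q w)) <= s3.
  by rewrite -lee_fin /s3 fineK ?(J1_fin P sW mW rQU rQV) //; apply: J1_ub.
have hf : dmi P QU qJ <= dmi P QU Q.
  apply: dmi_ker; try rvs; by move=> w w' [-> _ _].
have hg := chain_ineq P ra1 rr ra2 rv' rv_ rQ.
have E1 : dmi P QU (fun w => (QV w, Q w)) = dmi P T3 (fun w => ((v' w, v w), Q w)).
  apply: dmi_eq; try rvs; first by move=> w w'; rewrite ker_enum.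
  move=> w w'; rewrite /QV /T2 /Q /=.
  split => [[/enum_rank_inj [-> ->] -> -> ->]|[[-> ->] -> -> ->]] //.
have E2 : dmi P QU Q = dmi P T3 Q.
  apply: dmi_eq; try rvs; first by move=> w w'; rewrite ker_enum.
  done.
rewrite /T3 in E1 E2; rewrite -E1 -E2 in hg.
have key : s1 - t1 + (s2 - t2) <= s3 - t3 + e.
  rewrite /eps in hq1 hq' hqJ hfano; rewrite -/s1 in hq1; rewrite -/s2 in hq'; rewrite -/t3 in hqJ.
  lra.
apply: le_trans (_ : (s3 - t3)%:E + e%:E <= _)%E; first by rewrite -EFinD lee_fin.
rewrite leeD2r //.
have -> : ((s3 - t3)%:E = cmi_fin P GW QU QV)%E.
  by rewrite cmi_finE /s3 /t3 EFinB !fineK ?(J1_fin P sW mW rQU rQV) ?(J2_fin P sW mW rQU).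
apply: ereal_sup_ubound; exists #|{: 'I_n1 * K2 * 'I_n2}|, #|{: 'I_m1 * 'I_m2}|, QU, QV.
by split.
Qed.

End Core.

End P7.
Import P7.

Module P8.
Import Order.TTheory GRing.Theory Num.Theory.
Set Implicit Arguments. Unset Strict Implicit. Unset Printing Implicit Defensive.
Local Open Scope classical_set_scope.
Local Open Scope ring_scope.

Lemma sup_add_le (R : realType) (S1 S2 : set (\bar R)) (M : \bar R) :
  (exists x, S1 x) -> (exists y, S2 y) ->
  (forall x, S1 x -> x \is a fin_num) -> (forall y, S2 y -> y \is a fin_num) ->
  (forall x y, S1 x -> S2 y -> (x + y <= M)%E) -> (ereal_sup S1 + ereal_sup S2 <= M)%E.
Proof.
move=> [x0 Sx0] [y0 Sy0] f1 f2 H.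
case: M H => [m| |] H; last first.
- have := H x0 y0 Sx0 Sy0.
  by rewrite -(fineK (f1 _ Sx0)) -(fineK (f2 _ Sy0)) -EFinD leeNy_eq.
- exact: leey.
have ub1 y : S2 y -> (ereal_sup S1 <= (m - fine y)%:E)%E.
  move=> Sy; apply: ge_ereal_sup => x Sx; have := H x y Sx Sy.
  rewrite -(fineK (f1 _ Sx)) -(fineK (f2 _ Sy)) -EFinD !lee_fin => h; lra.
have fs : ereal_sup S1 \is a fin_num.
  rewrite fin_numElt; apply/andP; split.
    apply: (@lt_le_trans _ _ x0); last exact: ereal_sup_ubound.
    by rewrite -(fineK (f1 _ Sx0)) ltNyr.
  by apply: le_lt_trans (ub1 _ Sy0) _; exact: ltry.
set s := fine (ereal_sup S1).
have ub2 : (ereal_sup S2 <= (m - s)%:E)%E.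
  apply: ge_ereal_sup => y Sy; have := ub1 y Sy.
  rewrite -(fineK fs) -/s -(fineK (f2 _ Sy)) !lee_fin /= => h; lra.
rewrite -(fineK fs) -/s.
apply: le_trans (_ : (s%:E + (m - s)%:E <= _)%E); first by rewrite leeD2l.
by rewrite -EFinD lee_fin; lra.
Qed.

Section Split.
Variables (d : measure_display) (Omega : measurableType d) (R : realType).
Variable P : probability Omega R.
Local Notation rv := (@rv d Omega _).
Variables (GU GU1 GU2 GV' GV GW GW' : set (set Omega)).
Hypotheses (sU : sigma_algebra setT GU) (sU1 : sigma_algebra setT GU1)
  (sU2 : sigma_algebra setT GU2) (sV' : sigma_algebra setT GV') (sV : sigma_algebra setT GV)
  (sW : sigma_algebra setT GW) (sW' : sigma_algebra setT GW').
Hypotheses (mU : GU `<=` measurable) (mU1 : GU1 `<=` measurable) (mU2 : GU2 `<=` measurable)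
  (mV' : GV' `<=` measurable) (mV : GV `<=` measurable) (mW : GW `<=` measurable)
  (mW' : GW' `<=` measurable).
Hypotheses (iU1 : GU1 `<=` GU) (iU2 : GU2 `<=` GU) (iV : GV' `<=` GV) (iW : GW `<=` GW')
  (iU1W : GU1 `<=` GW') (iW' : GW' `<=` <<s GW `|` GU1 >>).

Lemma cmi_fin_fin (G GA GB : set (set Omega)) n m (A : Omega -> 'I_n) (B : Omega -> 'I_m) :
  sigma_algebra setT G -> G `<=` measurable -> GA `<=` measurable -> GB `<=` measurable ->
  quantization GA A -> quantization GB B -> cmi_fin P G A B \is a fin_num.
Proof.
move=> sG mG mA mB qA qB; rewrite cmi_finE fin_numB.
by rewrite (J1_fin P sG mG (fq_rv mA qA) (fq_rv mB qB)) (J2_fin P sG mG (fq_rv mA qA)).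
Qed.

Lemma cmi_ne (GA GB G : set (set Omega)) : sigma_algebra setT GA -> sigma_algebra setT GB ->
  exists x, [set x | exists n m (qu : Omega -> 'I_n) (qv : Omega -> 'I_m),
       quantization GA qu /\ quantization GB qv /\ x = cmi_fin P G qu qv] x.
Proof.
move=> sA sB; eexists; exists #|{: unit}|, #|{: unit}|, (enum_rank \o (fun _ => tt)),
  (enum_rank \o (fun _ => tt)).
split; first exact: quant_enum (fq_const sA tt).
split; first exact: quant_enum (fq_const sB tt).
reflexivity.
Qed.

Lemma split_cmi : (cmi P GU1 GV' GW + cmi P GU2 GV GW' <= cmi P GU GV GW)%E.
Proof.
apply: sup_add_le.
- exact: cmi_ne.
- exact: cmi_ne.
- by move=> x [n [m [qu [qv [hu [hv ->]]]]]]; apply: (cmi_fin_fin sW mW mU1 mV').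
- by move=> x [n [m [qu [qv [hu [hv ->]]]]]]; apply: (cmi_fin_fin sW' mW' mU2 mV).
move=> x y [n1 [m1 [a1 [v' [h1 [h2 ->]]]]]] [n2 [m2 [a2 [v [h3 [h4 ->]]]]]].
exact: (core P sU sU1 sV sW sW' mU mU1 mU2 mV' mV mW mW' iU1 iU2 iV iW iU1W iW' h1 h2 h3 h4).
Qed.

End Split.

End P8.
Import P8.

Module P9.
Import Order.TTheory GRing.Theory Num.Theory.
Set Implicit Arguments. Unset Strict Implicit. Unset Printing Implicit Defensive.
Local Open Scope classical_set_scope.
Local Open Scope ring_scope.

Section Comb.
Variable R : realType.
Variable f : R -> R -> \bar R.
Hypothesis fsplit : forall a s b : R, 0 <= a -> a <= s -> s <= b -> (f a s + f s b <= f a b)%E.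

Fixpoint Dr (s : seq R) : \bar R :=
  match s with
  | x :: ((y :: _) as s') => (f x y + Dr s')%E
  | _ => 0%E
  end.

Let ltT : transitive (fun x y : R => x < y).
Proof. by move=> y x z; apply: lt_trans. Qed.

Lemma Dr2 x y s : Dr (x :: y :: s) = (f x y + Dr (y :: s))%E.
Proof. by []. Qed.

Lemma Dr1 x : Dr [:: x] = 0%E.
Proof. by []. Qed.

Lemma Dr_split x m y r : Dr (x :: m ++ y :: r) = (Dr (x :: rcons m y) + Dr (y :: r))%E.
Proof.
elim: m x => [|a m IH] x; first by rewrite cat0s [rcons _ _]/= !Dr2 Dr1 adde0.
rewrite cat_cons rcons_cons !Dr2 IH addeA; done.
Qed.

Lemma chain x m y : 0 <= x -> sorted (fun a b : R => a < b) (x :: rcons m y) ->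
  (Dr (x :: rcons m y) <= f x y)%E.
Proof.
elim: m x => [|a m IH] x x0; first by rewrite [rcons _ _]/= Dr2 Dr1 adde0.
rewrite rcons_cons Dr2 /= => /andP[xa pa].
have a0 : 0 <= a by apply: le_trans (ltW xa).
have ay : a < y.
  have := order_path_min ltT pa; move/allP; apply; by rewrite mem_rcons mem_head.
apply: le_trans (_ : f x a + f a y <= _)%E; last by apply: fsplit => //; apply: ltW.
by apply: leeD => //; apply: IH.
Qed.

Lemma lt_before m y r w : sorted (fun a b : R => a < b) (m ++ y :: r) -> w \in m -> w < y.
Proof.
elim: m => [|a m IH] //= pa; rewrite inE => /orP[/eqP ->|wm].
  have := order_path_min ltT pa; move/allP; apply; by rewrite mem_cat mem_head orbT.
by apply: IH => //; exact: path_sorted pa.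
Qed.

Lemma refine_Dr t1 t' x : 0 <= x -> sorted (fun a b : R => a < b) (x :: t1) ->
  sorted (fun a b : R => a < b) (x :: t') -> {subset x :: t1 <= x :: t'} ->
  last x t1 = last x t' -> (Dr (x :: t') <= Dr (x :: t1))%E.
Proof.
elim: t1 t' x => [|y t2 IH] t' x x0 st st' sub hl.
  case: t' st' sub hl => [|z t'] //= st' _ hl.
  have st'' : path (fun a b : R => a < b) x (z :: t') by [].
  have := order_path_min ltT st''; move/allP => /(_ (last z t')).
  by rewrite mem_last -hl ltxx => /(_ isT).
have xy : x < y by move: st => /= /andP[].
have : y \in x :: t' by apply: sub; rewrite inE mem_head orbT.
rewrite inE => /orP[/eqP yx|yt']; first by move: xy; rewrite yx ltxx.
case/splitPr: yt' st' sub hl => m r st' sub hl.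
rewrite Dr_split Dr2.
apply: leeD.
  apply: chain => //.
  move: st'; rewrite /= cat_path rcons_path => /andP[-> /= /andP[-> _]] //.
apply: IH.
- by apply: le_trans (ltW xy).
- exact: path_sorted st.
- by move: st'; rewrite /= cat_path => /andP[_ /path_sorted].
- move=> z; rewrite inE => /orP[/eqP ->|zt2]; first exact: mem_head.
  have yz : y < z.
    have := order_path_min ltT (path_sorted st); move/allP; apply; exact: zt2.
  have : z \in x :: m ++ y :: r by apply: sub; rewrite !inE zt2 !orbT.
  rewrite inE => /orP[/eqP zx|]; first by move: (lt_trans xy yz); rewrite zx ltxx.
  rewrite mem_cat => /orP[zm|//].
  have := lt_before (path_sorted st') zm.
  by move=> zy; move: (lt_trans zy yz); rewrite ltxx.
- by move: hl; rewrite /= last_cat.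
Qed.

End Comb.

End P9.
Import P9.

Module P10.
Import Order.TTheory GRing.Theory Num.Theory.
Set Implicit Arguments. Unset Strict Implicit. Unset Printing Implicit Defensive.
Local Open Scope classical_set_scope.
Local Open Scope ring_scope.

Section Seg.
Variables (d : measure_display) (Omega : measurableType d) (R : realType).
Variables (dT : measure_display) (T : measurableType dT) (X : R -> Omega -> T).
Hypothesis hX : forall s, measurable_fun setT (X s).

Lemma seg_sa a b : sigma_algebra setT (seg_sigma X a b).
Proof. exact: smallest_sigma_algebra. Qed.

Lemma seg_meas a b : seg_sigma X a b `<=` measurable.
Proof.
apply: smallest_sub; first exact: sigma_algebra_measurable.
move=> E [s [A [_ [mA ->]]]]; rewrite -[X s @^-1` A]setTI; exact: hX.
Qed.

Lemma seg_mono a b a' b' : a' <= a -> b <= b' -> seg_sigma X a b `<=` seg_sigma X a' b'.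
Proof.
move=> aa bb; apply: sub_sigma_algebra2 => E [s [A [/andP[as_ sb] [mA ->]]]].
exists s, A; split => //; apply/andP; split; [exact: le_trans as_|exact: lt_le_trans bb].
Qed.

Lemma seg_join a s : 0 <= a -> a <= s ->
  seg_sigma X 0 s `<=` <<s seg_sigma X 0 a `|` seg_sigma X a s >>.
Proof.
move=> a0 as_; apply: smallest_sub; first exact: smallest_sigma_algebra.
move=> E [u [A [/andP[u0 us] [mA ->]]]]; apply: sub_sigma_algebra.
have [ua|au] := ltP u a.
  by left; apply: sub_sigma_algebra; exists u, A; rewrite u0 ua.
by right; apply: sub_sigma_algebra; exists u, A; rewrite au us.
Qed.

End Seg.

End P10.
Import P10.

Module P11.
Unset Implicit Arguments.
Import Order.TTheory GRing.Theory Num.Theory.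
Local Open Scope classical_set_scope.
Local Open Scope ring_scope.

Section Final.
Variables (d : measure_display) (Omega : measurableType d) (R : realType).
Variable P : probability Omega R.
Variables (dX dY : measure_display) (TX : measurableType dX) (TY : measurableType dY)
    (X : R -> Omega -> TX) (Y : R -> Omega -> TY).
Hypotheses (hX : forall s, measurable_fun setT (X s)) (hY : forall s, measurable_fun setT (Y s)).

Definition fseg (a b : R) : \bar R :=
  cmi P (seg_sigma Y a b) (seg_sigma X 0 b) (seg_sigma Y 0 a).

Lemma fseg_split a s b : 0 <= a -> a <= s -> s <= b -> (fseg a s + fseg s b <= fseg a b)%E.
Proof.
move=> a0 as_ sb; rewrite /fseg.
apply: split_cmi; try exact: seg_sa; try exact: seg_meas.
- exact: seg_mono.
- exact: seg_mono.
- exact: seg_mono.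
- exact: seg_mono.
- exact: seg_mono.
- exact: seg_join.
Qed.

Lemma dir_Dr t : dir_info_part P X Y t = Dr fseg t.
Proof.
rewrite /dir_info_part.
elim: t => [|x s IH]; first by rewrite big_geq.
case: s IH => [|y r] IH; first by rewrite big_geq.
rewrite Dr2 -IH /= big_ltn // big_add1 /=.
congr (_ + _)%E.
apply: eq_big_nat => j /andP[j1 _].
by case: j j1.
Qed.

End Final.


End P11.
Import P11.

Unset Implicit Arguments.
Theorem proposition1 (d : measure_display) (Omega : measurableType d)
    (R : realType) (P : probability Omega R)
    (dX dY : measure_display) (TX : measurableType dX) (TY : measurableType dY)
    (X : R -> Omega -> TX) (Y : R -> Omega -> TY)
    (hX : forall s, measurable_fun setT (X s))
    (hY : forall s, measurable_fun setT (Y s))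
    (T : R) (t t' : seq R)
    (ht : is_partition T t) (ht' : is_partition T t')
    (href : {subset t <= t'}) :
  (dir_info_part P X Y t' <= dir_info_part P X Y t)%E.
Proof.
rewrite !dir_Dr.
case: ht => s1 st n0 nl; case: ht' => s1' st' n0' nl'.
case: t s1 st n0 nl href => [//|x t1] _ st /= x0 nl href; subst x.
case: t' s1' st' n0' nl' href => [//|x' t1'] _ st' /= x0' nl' href; subst x'.
apply: refine_Dr => //.
- move=> a s b a0 as_ sb; exact: fseg_split.
have e1 : last 0 t1 = (0 :: t1)`_(size t1) := esym (nth_last 0 (0 :: t1)).
have e2 : last 0 t1' = (0 :: t1')`_(size t1') := esym (nth_last 0 (0 :: t1')).
by rewrite e1 e2 nl nl'.
Qed.
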